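(* Let $\mathcal{X}$ be a finite-dimensional Hilbert space, $\sigma\in\mathcal{D}(\mathcal{X})$, $\Phi$ a quantum channel on $\mathcal{L}(\mathcal{X})$ with Kraus operators $\{A_i\}_i$, $H$ a Hermitian operator on $\mathcal{X}$, $\epsilon\in\mathbb{R}$, $U_\epsilon=\exp(-i\epsilon H)$, and $\Psi(\rho)=U_\epsilon\Phi(\rho)U_\epsilon^\dagger$. Then $$G_{\mathrm{ch}}(\Phi,\Psi;\sigma)=1+\sum_{i,j}\left|\operatorname{Tr}(\sigma A_i^\dagger U_\epsilon A_j)\right|^2-\sum_{i,j}\left|\operatorname{Tr}(\sigma A_i^\dagger A_j)\right|^2.$$
   Context: $\mathcal{D}(\mathcal{X})$ is the set of density operators on $\mathcal{X}$. Superfidelity: $G(\rho_1,\rho_2)=\operatorname{Tr}(\rho_1\rho_2)+\sqrt{1-\operatorname{Tr}\rho_1^2}\sqrt{1-\operatorname{Tr}\rho_2^2}$. Channel superfidelity: $G_{\mathrm{ch}}(\Phi,\Psi;\sigma)=\inf G\big((\Phi\otimes\mathbb{1}_{\mathcal{L}(\mathcal{Z})})(\xi),(\Psi\otimes\mathbb{1}_{\mathcal{L}(\mathcal{Z})})(\xi)\big)$ over all finite-dimensional $\mathcal{Z}$ and all pure states $\xi$ on $\mathcal{X}\otimes\mathcal{Z}$ with $\operatorname{Tr}_{\mathcal{Z}}\xi=\sigma$. *)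

(* Defs.v *)
From Stdlib Require Import Reals Lra Factorial.
Open Scope R_scope.

Record C := mkC { Re : R; Im : R }.
Definition C0 : C := mkC 0 0.
Definition C1 : C := mkC 1 0.
Definition Cadd (z w : C) : C := mkC (Re z + Re w) (Im z + Im w).
Definition Cmul (z w : C) : C :=
  mkC (Re z * Re w - Im z * Im w) (Re z * Im w + Im z * Re w).
Definition Cconj (z : C) : C := mkC (Re z) (- Im z).
Definition Cscale (a : R) (z : C) : C := mkC (a * Re z) (a * Im z).
Definition Cnorm2 (z : C) : R := Re z * Re z + Im z * Im z.

Fixpoint Csum (n : nat) (f : nat -> C) : C :=
  match n with O => C0 | S k => Cadd (Csum k f) (f k) end.
Fixpoint Rsum (n : nat) (f : nat -> R) : R :=
  match n with O => 0 | S k => Rsum k f + f k end.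

(** * Matrices: operators on C^d are represented by their entries at indices < d *)
Definition Mat := nat -> nat -> C.
Definition Vec := nat -> C.
Definition mid : Mat := fun i j => if Nat.eqb i j then C1 else C0.
Definition mmul (d : nat) (A B : Mat) : Mat :=
  fun i j => Csum d (fun k => Cmul (A i k) (B k j)).
Definition madj (A : Mat) : Mat := fun i j => Cconj (A j i).
Definition mscale (c : C) (A : Mat) : Mat := fun i j => Cmul c (A i j).
Definition msum (r : nat) (F : nat -> Mat) : Mat := fun i j => Csum r (fun k => F k i j).
Definition mtrace (d : nat) (A : Mat) : C := Csum d (fun i => A i i).
Fixpoint mpow (d : nat) (M : Mat) (k : nat) : Mat :=
  match k with O => mid | S k' => mmul d (mpow d M k') M end.

Definition meq (d : nat) (A B : Mat) : Prop :=
  forall i j, (i < d)%nat -> (j < d)%nat -> A i j = B i j.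

Definition hermitian (d : nat) (H : Mat) : Prop := meq d H (madj H).
Definition psd (d : nat) (S : Mat) : Prop :=
  hermitian d S /\
  forall v : Vec, 0 <= Re (Csum d (fun i => Cmul (Cconj (v i))
                                         (Csum d (fun j => Cmul (S i j) (v j))))).
Definition density (d : nat) (S : Mat) : Prop := psd d S /\ mtrace d S = C1.

Definition is_mexp (d : nat) (M U : Mat) : Prop :=
  forall i j, (i < d)%nat -> (j < d)%nat ->
    Un_cv (fun N => Re (Csum (S N) (fun k => Cscale (/ INR (fact k)) (mpow d M k i j))))
          (Re (U i j)) /\
    Un_cv (fun N => Im (Csum (S N) (fun k => Cscale (/ INR (fact k)) (mpow d M k i j))))
          (Im (U i j)).

Definition kraus (n r : nat) (A : nat -> Mat) : Prop :=
  meq n (msum r (fun k => mmul n (madj (A k)) (A k))) mid.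
Definition chan (d r : nat) (A : nat -> Mat) (rho : Mat) : Mat :=
  msum r (fun k => mmul d (mmul d (A k) rho) (madj (A k))).

(** C^n (x) C^m identified with C^(n*m), basis e_a (x) f_b |-> index a*m+b *)
Definition kron_id (n m : nat) (A : Mat) : Mat :=
  fun i j => if Nat.eqb (i mod m)%nat (j mod m)%nat then A (i / m)%nat (j / m)%nat else C0.
Definition ptraceZ (n m : nat) (X : Mat) : Mat :=
  fun a b => Csum m (fun k => X (a * m + k)%nat (b * m + k)%nat).

Definition chan_ext (n r : nat) (A : nat -> Mat) (m : nat) (rho : Mat) : Mat :=
  chan (n * m) r (fun k => kron_id n m (A k)) rho.

Definition unit_vec (D : nat) (psi : Vec) : Prop := Rsum D (fun k => Cnorm2 (psi k)) = 1.
Definition proj (psi : Vec) : Mat := fun i j => Cmul (psi i) (Cconj (psi j)).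

Definition superfidelity (d : nat) (r1 r2 : Mat) : R :=
  Re (mtrace d (mmul d r1 r2))
  + sqrt (1 - Re (mtrace d (mmul d r1 r1))) * sqrt (1 - Re (mtrace d (mmul d r2 r2))).

(** The set whose infimum is G_ch(Phi,Psi;sigma).  PhiZ m (resp. PsiZ m) is
    Phi (x) id_{L(C^m)} (resp. Psi (x) id_{L(C^m)}). *)
Definition Gch_values (n : nat) (PhiZ PsiZ : nat -> Mat -> Mat) (sigma : Mat) : R -> Prop :=
  fun g => exists (m : nat) (psi : Vec),
    unit_vec (n * m) psi /\ meq n (ptraceZ n m (proj psi)) sigma /\
    g = superfidelity (n * m) (PhiZ m (proj psi)) (PsiZ m (proj psi)).

Definition is_glb (S : R -> Prop) (x : R) : Prop :=
  (forall y, S y -> x <= y) /\ (forall z, (forall y, S y -> z <= y) -> z <= x).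

(* Main.v *)
From Stdlib Require Import Reals Lra Lia Psatz Ring Field FunctionalExtensionality Factorial Binomial.
From Coquelicot Require Import Series Lim_seq Rbar Hierarchy PSeries ElemFct.
Require Import Defs.
Open Scope R_scope.

Definition Copp (z : C) : C := mkC (- Re z) (- Im z).
Definition Csub (z w : C) : C := Cadd z (Copp w).

Lemma Cext (z w : C) : Re z = Re w -> Im z = Im w -> z = w.
Proof. destruct z, w; simpl; intros -> ->; reflexivity. Qed.

Lemma Cring_th : ring_theory C0 C1 Cadd Cmul Csub Copp (@eq C).
Proof.
  constructor; intros; apply Cext; unfold Csub, Cadd, Cmul, Copp, C0, C1; simpl; ring.
Qed.
Add Ring Cring : Cring_th.

Lemma Cconj_add z w : Cconj (Cadd z w) = Cadd (Cconj z) (Cconj w).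
Proof. apply Cext; simpl; ring. Qed.
Lemma Cconj_mul z w : Cconj (Cmul z w) = Cmul (Cconj z) (Cconj w).
Proof. apply Cext; simpl; ring. Qed.
Lemma Cconj_conj z : Cconj (Cconj z) = z.
Proof. apply Cext; simpl; ring. Qed.
Lemma Cconj_0 : Cconj C0 = C0.
Proof. apply Cext; simpl; ring. Qed.
Lemma Cconj_1 : Cconj C1 = C1.
Proof. apply Cext; simpl; ring. Qed.
Lemma Cconj_opp z : Cconj (Copp z) = Copp (Cconj z).
Proof. apply Cext; simpl; ring. Qed.

Lemma Csum_ext n f g : (forall k, (k < n)%nat -> f k = g k) -> Csum n f = Csum n g.
Proof.
  induction n; simpl; intros H; [reflexivity|].
  rewrite IHn by (intros; apply H; lia). rewrite H by lia. reflexivity.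
Qed.
Lemma Csum_add n f g : Csum n (fun k => Cadd (f k) (g k)) = Cadd (Csum n f) (Csum n g).
Proof. induction n; simpl; [apply Cext; simpl; ring|]. rewrite IHn; ring. Qed.
Lemma Csum_mul_l n c f : Csum n (fun k => Cmul c (f k)) = Cmul c (Csum n f).
Proof. induction n; simpl; [apply Cext; simpl; ring|]. rewrite IHn; ring. Qed.
Lemma Csum_mul_r n c f : Csum n (fun k => Cmul (f k) c) = Cmul (Csum n f) c.
Proof. induction n; simpl; [apply Cext; simpl; ring|]. rewrite IHn; ring. Qed.
Lemma Csum_opp n f : Csum n (fun k => Copp (f k)) = Copp (Csum n f).
Proof. induction n; simpl; [apply Cext; simpl; ring|]. rewrite IHn; ring. Qed.
Lemma Csum_zero n f : (forall k, (k < n)%nat -> f k = C0) -> Csum n f = C0.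
Proof.
  induction n; simpl; intros H; [reflexivity|].
  rewrite IHn by (intros; apply H; lia). rewrite H by lia. ring.
Qed.
Lemma Csum_conj n f : Cconj (Csum n f) = Csum n (fun k => Cconj (f k)).
Proof. induction n; simpl; [apply Cconj_0|]. rewrite Cconj_add, IHn; reflexivity. Qed.
Lemma Csum_swap n m (f : nat -> nat -> C) :
  Csum n (fun i => Csum m (fun j => f i j)) = Csum m (fun j => Csum n (fun i => f i j)).
Proof.
  induction n; simpl.
  - symmetry; apply Csum_zero; reflexivity.
  - rewrite IHn, <- Csum_add. reflexivity.
Qed.
Lemma Csum_app p q f : Csum (p + q) f = Cadd (Csum p f) (Csum q (fun k => f (p + k)%nat)).
Proof.
  induction q; simpl.
  - rewrite Nat.add_0_r. ring.
  - rewrite Nat.add_succ_r; simpl. rewrite IHq. ring.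
Qed.
Lemma Csum_mult n m f :
  Csum (n * m) f = Csum n (fun a => Csum m (fun k => f (a * m + k)%nat)).
Proof.
  induction n; simpl; [reflexivity|].
  rewrite Nat.add_comm, Csum_app, IHn. reflexivity.
Qed.
Lemma Csum_delta n k (x : nat -> C) : (k < n)%nat ->
  Csum n (fun i => if Nat.eqb i k then x i else C0) = x k.
Proof.
  induction n; intros Hk; [lia|]. simpl.
  destruct (Nat.eq_dec k n) as [->|Hne].
  - rewrite Csum_zero. rewrite Nat.eqb_refl. ring.
    intros j Hj. destruct (Nat.eqb_spec j n); [lia|reflexivity].
  - rewrite IHn by lia. destruct (Nat.eqb_spec n k); [lia|]. ring.
Qed.
Lemma Csum_mid_l n i f : (i < n)%nat -> Csum n (fun j => Cmul (mid i j) (f j)) = f i.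
Proof.
  intros Hi. rewrite <- (Csum_delta n i f Hi). apply Csum_ext; intros j _.
  unfold mid. destruct (Nat.eqb_spec i j), (Nat.eqb_spec j i); subst; try lia;
  apply Cext; simpl; ring.
Qed.
Lemma Csum_mid_r n j f : (j < n)%nat -> Csum n (fun i => Cmul (f i) (mid i j)) = f j.
Proof.
  intros Hj. rewrite <- (Csum_delta n j f Hj). apply Csum_ext; intros i _.
  unfold mid. destruct (Nat.eqb_spec i j); subst; apply Cext; simpl; ring.
Qed.

Lemma Re_Csum n f : Re (Csum n f) = Rsum n (fun k => Re (f k)).
Proof. induction n; simpl; [reflexivity|]. rewrite IHn; reflexivity. Qed.
Lemma Im_Csum n f : Im (Csum n f) = Rsum n (fun k => Im (f k)).
Proof. induction n; simpl; [reflexivity|]. rewrite IHn; reflexivity. Qed.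

Lemma Rsum_ext n f g : (forall k, (k < n)%nat -> f k = g k) -> Rsum n f = Rsum n g.
Proof.
  induction n; simpl; intros H; [reflexivity|].
  rewrite IHn by (intros; apply H; lia). rewrite H by lia. reflexivity.
Qed.
Lemma Rsum_add n f g : Rsum n (fun k => f k + g k) = Rsum n f + Rsum n g.
Proof. induction n; simpl; [ring|]. rewrite IHn; ring. Qed.
Lemma Rsum_mul_l n c f : Rsum n (fun k => c * f k) = c * Rsum n f.
Proof. induction n; simpl; [ring|]. rewrite IHn; ring. Qed.
Lemma Rsum_le n f g : (forall k, (k < n)%nat -> f k <= g k) -> Rsum n f <= Rsum n g.
Proof.
  induction n; simpl; intros H; [lra|].
  assert (Rsum n f <= Rsum n g) by (apply IHn; intros; apply H; lia).
  assert (f n <= g n) by (apply H; lia). lra.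
Qed.
Lemma Rsum_nonneg n f : (forall k, (k < n)%nat -> 0 <= f k) -> 0 <= Rsum n f.
Proof.
  intros H. replace 0 with (Rsum n (fun _ => 0)). apply Rsum_le; auto.
  clear H; induction n; simpl; [reflexivity|]. rewrite IHn; ring.
Qed.
Lemma Rsum_swap n m (f : nat -> nat -> R) :
  Rsum n (fun i => Rsum m (fun j => f i j)) = Rsum m (fun j => Rsum n (fun i => f i j)).
Proof.
  induction n; simpl.
  - clear f. induction m; simpl; [reflexivity|]. rewrite <- IHm; ring.
  - rewrite IHn, <- Rsum_add. reflexivity.
Qed.
Lemma Rsum_app p q f : Rsum (p + q) f = Rsum p f + Rsum q (fun k => f (p + k)%nat).
Proof.
  induction q; simpl.
  - rewrite Nat.add_0_r. ring.
  - rewrite Nat.add_succ_r; simpl. rewrite IHq. ring.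
Qed.
Lemma Rsum_mult n m f :
  Rsum (n * m) f = Rsum n (fun a => Rsum m (fun k => f (a * m + k)%nat)).
Proof.
  induction n; simpl; [reflexivity|].
  rewrite Nat.add_comm, Rsum_app, IHn. reflexivity.
Qed.

Definition mv (d : nat) (X : Mat) (psi : Vec) : Vec := fun i => Csum d (fun j => Cmul (X i j) (psi j)).
Definition inner (d : nat) (x y : Vec) : C := Csum d (fun i => Cmul (Cconj (x i)) (y i)).
Definition sp (r : nat) (phi : nat -> Vec) : Mat :=
  fun i j => Csum r (fun k => Cmul (phi k i) (Cconj (phi k j))).

Lemma Csum_prod n m f g :
  Cmul (Csum n f) (Csum m g) = Csum n (fun i => Csum m (fun j => Cmul (f i) (g j))).
Proof.
  rewrite <- Csum_mul_r. apply Csum_ext; intros i _. rewrite <- Csum_mul_l. reflexivity.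
Qed.

Lemma conj_sp d r X phi :
  mmul d (mmul d X (sp r phi)) (madj X) = sp r (fun k => mv d X (phi k)).
Proof.
  extensionality i; extensionality j. unfold mmul, sp, mv, madj.
  transitivity (Csum d (fun l => Csum d (fun k' => Csum r (fun k =>
     Cmul (Cmul (X i k') (phi k k')) (Cmul (Cconj (phi k l)) (Cconj (X j l))))))).
  - apply Csum_ext; intros l _. rewrite <- Csum_mul_r. apply Csum_ext; intros k' _.
    rewrite <- Csum_mul_l, <- Csum_mul_r. apply Csum_ext; intros k _. ring.
  - transitivity (Csum d (fun l => Csum r (fun k => Csum d (fun k' =>
     Cmul (Cmul (X i k') (phi k k')) (Cmul (Cconj (phi k l)) (Cconj (X j l))))))).
    { apply Csum_ext; intros l _. apply Csum_swap. }
    rewrite Csum_swap. apply Csum_ext; intros k _.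
    rewrite Csum_conj, Csum_prod, Csum_swap. apply Csum_ext; intros l _.
    apply Csum_ext; intros k' _. rewrite Cconj_mul. ring.
Qed.

Lemma Cnorm2_re z : Re (Cmul (Cconj z) z) = Cnorm2 z.
Proof. unfold Cnorm2; simpl; ring. Qed.

Lemma inner_conj d x y : inner d y x = Cconj (inner d x y).
Proof.
  unfold inner. rewrite Csum_conj. apply Csum_ext; intros i _.
  rewrite Cconj_mul, Cconj_conj. ring.
Qed.

Lemma trace_sp D r r' x y :
  Re (mtrace D (mmul D (sp r x) (sp r' y))) =
  Rsum r (fun k => Rsum r' (fun l => Cnorm2 (inner D (x k) (y l)))).
Proof.
  assert (E : mtrace D (mmul D (sp r x) (sp r' y)) =
     Csum r (fun k => Csum r' (fun l => Cmul (Cconj (inner D (x k) (y l))) (inner D (x k) (y l))))).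
  { unfold mtrace, mmul, sp.
    transitivity (Csum D (fun i => Csum D (fun j => Csum r (fun k => Csum r' (fun l =>
       Cmul (Cmul (Cconj (y l i)) (x k i)) (Cmul (Cconj (x k j)) (y l j))))))).
    - apply Csum_ext; intros i _. apply Csum_ext; intros j _. rewrite Csum_prod.
      apply Csum_ext; intros k _. apply Csum_ext; intros l _. ring.
    - transitivity (Csum D (fun i => Csum r (fun k => Csum r' (fun l => Csum D (fun j =>
          Cmul (Cmul (Cconj (y l i)) (x k i)) (Cmul (Cconj (x k j)) (y l j))))))).
      { apply Csum_ext; intros i _. rewrite Csum_swap. apply Csum_ext; intros k _.
        apply Csum_swap. }
      rewrite Csum_swap. apply Csum_ext; intros k _. rewrite Csum_swap.
      apply Csum_ext; intros l _. unfold inner. rewrite Csum_conj, Csum_prod.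
      apply Csum_ext; intros i _. apply Csum_ext; intros j _.
      rewrite Cconj_mul, Cconj_conj. ring. }
  rewrite E, Re_Csum. apply Rsum_ext; intros k _. rewrite Re_Csum.
  apply Rsum_ext; intros l _. apply Cnorm2_re.
Qed.

Lemma idx_mod a m c : (c < m)%nat -> ((a * m + c) mod m = c)%nat.
Proof.
  intros Hc. rewrite Nat.add_comm, Nat.Div0.mod_add by lia. apply Nat.mod_small; lia.
Qed.
Lemma idx_div a m c : (c < m)%nat -> ((a * m + c) / m = a)%nat.
Proof.
  intros Hc. rewrite Nat.add_comm, Nat.div_add by lia. rewrite Nat.div_small by lia. lia.
Qed.
Lemma idx_decomp n m i : (i < n * m)%nat ->
  i = (i / m * m + i mod m)%nat /\ (i / m < n)%nat /\ (i mod m < m)%nat.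
Proof.
  intros Hi. assert (m <> 0%nat) by (intro; subst; lia).
  split; [|split].
  - rewrite Nat.mul_comm. apply Nat.div_mod; lia.
  - apply Nat.Div0.div_lt_upper_bound. lia.
  - apply Nat.mod_upper_bound; lia.
Qed.

Definition kv (n m : nat) (X : Mat) (psi : Vec) (a c : nat) : C :=
  Csum n (fun b => Cmul (X a b) (psi (b * m + c)%nat)).

Lemma kron_mv n m X psi a c : (c < m)%nat ->
  mv (n * m) (kron_id n m X) psi (a * m + c)%nat = kv n m X psi a c.
Proof.
  intros Hc. unfold mv, kv. rewrite Csum_mult. apply Csum_ext; intros b Hb.
  unfold kron_id. rewrite idx_mod, idx_div by lia.
  rewrite <- (Csum_delta m c (fun l => Cmul (X a b) (psi (b * m + l)%nat))) by lia.
  apply Csum_ext; intros l Hl. rewrite idx_mod, idx_div by lia.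
  destruct (Nat.eqb_spec c l), (Nat.eqb_spec l c); subst; try lia; try reflexivity.
  apply Cext; simpl; ring.
Qed.

Lemma kron_mv_comp n m X Y psi i : (i < n * m)%nat ->
  mv (n * m) (kron_id n m X) (mv (n * m) (kron_id n m Y) psi) i =
  mv (n * m) (kron_id n m (mmul n X Y)) psi i.
Proof.
  intros Hi. destruct (idx_decomp n m i Hi) as [Ei [Ha Hc]].
  rewrite Ei. set (a := (i / m)%nat) in *. set (c := (i mod m)%nat) in *.
  rewrite !kron_mv by lia. unfold kv at 1.
  transitivity (Csum n (fun b => Cmul (X a b) (kv n m Y psi b c))).
  { apply Csum_ext; intros b Hb. rewrite kron_mv by lia. reflexivity. }
  unfold kv, mmul. 
  transitivity (Csum n (fun b => Csum n (fun e => Cmul (Cmul (X a b) (Y b e)) (psi (e * m + c)%nat)))).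
  { apply Csum_ext; intros b _. rewrite <- Csum_mul_l. apply Csum_ext; intros e _. ring. }
  rewrite Csum_swap. apply Csum_ext; intros e _. rewrite Csum_mul_r. reflexivity.
Qed.

Lemma inner_kron n m X Y psi :
  inner (n * m) (mv (n * m) (kron_id n m X) psi) (mv (n * m) (kron_id n m Y) psi) =
  mtrace n (mmul n (ptraceZ n m (proj psi)) (mmul n (madj X) Y)).
Proof.
  unfold inner. rewrite Csum_mult.
  transitivity (Csum n (fun a => Csum m (fun c => Cmul (Cconj (kv n m X psi a c)) (kv n m Y psi a c)))).
  { apply Csum_ext; intros a _; apply Csum_ext; intros c Hc. rewrite !kron_mv by lia. reflexivity. }
  transitivity (Csum n (fun a => Csum n (fun b => Csum n (fun e => Csum m (fun c =>
     Cmul (Cmul (Cconj (X a b)) (Y a e)) (Cmul (psi (e * m + c)%nat) (Cconj (psi (b * m + c)%nat)))))))).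
  { apply Csum_ext; intros a _. unfold kv.
    transitivity (Csum m (fun c => Csum n (fun b => Csum n (fun e =>
     Cmul (Cmul (Cconj (X a b)) (Y a e)) (Cmul (psi (e * m + c)%nat) (Cconj (psi (b * m + c)%nat))))))).
    { apply Csum_ext; intros c _. rewrite Csum_conj, Csum_prod.
      apply Csum_ext; intros b _; apply Csum_ext; intros e _. rewrite Cconj_mul. ring. }
    rewrite Csum_swap. apply Csum_ext; intros b _. rewrite Csum_swap. reflexivity. }
  unfold mtrace, mmul, ptraceZ, proj, madj.
  transitivity (Csum n (fun e => Csum n (fun b => Csum n (fun a => Csum m (fun c =>
     Cmul (Cmul (Cconj (X a b)) (Y a e)) (Cmul (psi (e * m + c)%nat) (Cconj (psi (b * m + c)%nat)))))))).
  { rewrite Csum_swap.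
    transitivity (Csum n (fun b => Csum n (fun e => Csum n (fun a => Csum m (fun c =>
     Cmul (Cmul (Cconj (X a b)) (Y a e)) (Cmul (psi (e * m + c)%nat) (Cconj (psi (b * m + c)%nat)))))))).
    { apply Csum_ext; intros b _. apply Csum_swap. }
    apply Csum_swap. }
  apply Csum_ext; intros e _. apply Csum_ext; intros b _.
  rewrite Csum_prod. rewrite Csum_swap. apply Csum_ext; intros a _. apply Csum_ext; intros c _. ring.
Qed.

Lemma mmul_assoc d A B X i j : mmul d (mmul d A B) X i j = mmul d A (mmul d B X) i j.
Proof.
  unfold mmul.
  transitivity (Csum d (fun k => Csum d (fun l => Cmul (A i l) (Cmul (B l k) (X k j))))).
  { apply Csum_ext; intros k _. rewrite <- Csum_mul_r. apply Csum_ext; intros l _. ring. }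
  rewrite Csum_swap. apply Csum_ext; intros l _. rewrite <- Csum_mul_l. reflexivity.
Qed.
Lemma mmul_meq d A A' B B' : meq d A A' -> meq d B B' -> meq d (mmul d A B) (mmul d A' B').
Proof.
  intros HA HB i j Hi Hj. unfold mmul. apply Csum_ext; intros k Hk. rewrite HA, HB by lia. reflexivity.
Qed.
Lemma meq_refl d A : meq d A A.
Proof. intros i j _ _; reflexivity. Qed.
Lemma meq_trans d A B X : meq d A B -> meq d B X -> meq d A X.
Proof. intros H1 H2 i j Hi Hj. rewrite H1, H2 by lia. reflexivity. Qed.
Lemma meq_sym d A B : meq d A B -> meq d B A.
Proof. intros H1 i j Hi Hj. rewrite H1 by lia. reflexivity. Qed.
Lemma mtrace_meq d A A' : meq d A A' -> mtrace d A = mtrace d A'.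
Proof. intros H. unfold mtrace. apply Csum_ext; intros k Hk. apply H; lia. Qed.
Lemma mmul_mid_l d B : meq d (mmul d mid B) B.
Proof. intros i j Hi Hj. unfold mmul. apply (Csum_mid_l d i (fun k => B k j)); lia. Qed.
Lemma mmul_mid_r d B : meq d (mmul d B mid) B.
Proof. intros i j Hi Hj. unfold mmul. apply (Csum_mid_r d j (fun k => B i k)); lia. Qed.
Lemma madj_mmul d A B i j : madj (mmul d A B) i j = mmul d (madj B) (madj A) i j.
Proof.
  unfold madj, mmul. rewrite Csum_conj. apply Csum_ext; intros k _. rewrite Cconj_mul. ring.
Qed.

Lemma proj_sp psi : proj psi = sp 1 (fun _ => psi).
Proof. extensionality i; extensionality j. unfold sp, proj; simpl. apply Cext; simpl; ring. Qed.

Lemma chan_sp d r B psi : chan d r B (proj psi) = sp r (fun k => mv d (B k) psi).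
Proof.
  extensionality i; extensionality j. unfold chan, msum, sp.
  apply Csum_ext; intros k _. rewrite proj_sp, conj_sp. unfold sp; simpl.
  apply Cext; simpl; ring.
Qed.

Lemma inner_ext d x x' y y' : (forall i, (i < d)%nat -> x i = x' i) ->
  (forall i, (i < d)%nat -> y i = y' i) -> inner d x y = inner d x' y'.
Proof. intros Hx Hy. unfold inner. apply Csum_ext; intros i Hi. rewrite Hx, Hy by lia. reflexivity. Qed.

Lemma Rsum_prod n m f g : Rsum n f * Rsum m g = Rsum n (fun i => Rsum m (fun j => f i * g j)).
Proof.
  rewrite Rmult_comm, <- Rsum_mul_l.
  apply Rsum_ext; intros i _. rewrite Rmult_comm, <- Rsum_mul_l. apply Rsum_ext; intros; ring.
Qed.
Lemma Rsum_sym n g : Rsum n (fun i => Rsum n (fun j => g i j)) =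
  / 2 * Rsum n (fun i => Rsum n (fun j => g i j + g j i)).
Proof.
  assert (E : Rsum n (fun i => Rsum n (fun j => g i j + g j i)) =
    Rsum n (fun i => Rsum n (fun j => g i j)) + Rsum n (fun i => Rsum n (fun j => g i j))).
  { transitivity (Rsum n (fun i => Rsum n (fun j => g i j)) + Rsum n (fun i => Rsum n (fun j => g j i))).
    { rewrite <- Rsum_add. apply Rsum_ext; intros. apply Rsum_add. }
    f_equal. rewrite Rsum_swap. reflexivity. }
  rewrite E. field.
Qed.

Lemma Rsum_sub n f g : Rsum n (fun k => f k - g k) = Rsum n f - Rsum n g.
Proof. induction n; simpl; [ring|]. rewrite IHn; ring. Qed.

Lemma inner_self_re d x : Re (inner d x x) = Rsum d (fun i => Cnorm2 (x i)).
Proof. unfold inner. rewrite Re_Csum. apply Rsum_ext; intros. rewrite Cnorm2_re. reflexivity. Qed.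
Lemma Cnorm2_nonneg z : 0 <= Cnorm2 z.
Proof. unfold Cnorm2; nra. Qed.

Lemma cauchy_schwarz d x y : Cnorm2 (inner d x y) <= Re (inner d x x) * Re (inner d y y).
Proof.
  rewrite !inner_self_re, Rsum_prod.
  rewrite <- Cnorm2_re. unfold inner. rewrite Csum_conj, Csum_prod, Re_Csum.
  set (z := fun i => Cmul (Cconj (x i)) (y i)).
  assert (H : 0 <= Rsum d (fun i => Rsum d (fun j =>
      Cnorm2 (x i) * Cnorm2 (y j) - Re (Cmul (Cconj (Cmul (Cconj (x i)) (y i))) (Cmul (Cconj (x j)) (y j)))))).
  { rewrite Rsum_sym. apply Rmult_le_pos; [lra|]. apply Rsum_nonneg; intros i _.
    apply Rsum_nonneg; intros j _.
    set (w := Csub (Cmul (x i) (y j)) (Cmul (x j) (y i))).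
    replace (_ + _) with (Cnorm2 w); [apply Cnorm2_nonneg|].
    unfold w, Cnorm2; simpl. ring. }
  assert (E : Rsum d (fun i => Re (Csum d (fun j => Cmul (Cconj (Cmul (Cconj (x i)) (y i))) (Cmul (Cconj (x j)) (y j))))) =
     Rsum d (fun i => Rsum d (fun j => Re (Cmul (Cconj (Cmul (Cconj (x i)) (y i))) (Cmul (Cconj (x j)) (y j)))))).
  { apply Rsum_ext; intros; apply Re_Csum. }
  rewrite E.
  assert (E2 : Rsum d (fun i => Rsum d (fun j =>
      Cnorm2 (x i) * Cnorm2 (y j) - Re (Cmul (Cconj (Cmul (Cconj (x i)) (y i))) (Cmul (Cconj (x j)) (y j))))) =
      Rsum d (fun i => Rsum d (fun j => Cnorm2 (x i) * Cnorm2 (y j))) -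
      Rsum d (fun i => Rsum d (fun j => Re (Cmul (Cconj (Cmul (Cconj (x i)) (y i))) (Cmul (Cconj (x j)) (y j)))))).
  { rewrite <- Rsum_sub. apply Rsum_ext; intros. apply Rsum_sub. }
  rewrite E2 in H. lra.
Qed.

Lemma pw_meq d A B : (forall i j, A i j = B i j) -> meq d A B.
Proof. intros H i j _ _; apply H. Qed.

Lemma trace_sum n r S X :
  Csum r (fun k => mtrace n (mmul n S (X k))) = mtrace n (mmul n S (msum r X)).
Proof.
  unfold mtrace, mmul, msum. rewrite Csum_swap. apply Csum_ext; intros i _.
  rewrite Csum_swap. apply Csum_ext; intros j _. rewrite Csum_mul_l. reflexivity.
Qed.

Lemma value_lemma n r sigma A U m psi :
  kraus n r A -> meq n (mmul n (madj U) U) mid -> mtrace n sigma = C1 ->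
  meq n (ptraceZ n m (proj psi)) sigma ->
  superfidelity (n * m) (chan_ext n r A m (proj psi))
    (mmul (n * m) (mmul (n * m) (kron_id n m U) (chan_ext n r A m (proj psi))) (madj (kron_id n m U)))
  = 1 + Rsum r (fun i => Rsum r (fun j =>
            Cnorm2 (mtrace n (mmul n sigma (mmul n (mmul n (madj (A i)) U) (A j))))))
       - Rsum r (fun i => Rsum r (fun j =>
            Cnorm2 (mtrace n (mmul n sigma (mmul n (madj (A i)) (A j)))))).
Proof.
  intros HK HU Htr Hs.
  set (D := (n * m)%nat).
  set (phi := fun k => mv D (kron_id n m (A k)) psi).
  assert (E1 : chan_ext n r A m (proj psi) = sp r phi) by (unfold chan_ext; apply chan_sp).
  rewrite E1, conj_sp. unfold superfidelity. rewrite !trace_sp.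
  assert (TE : forall X Y, inner D (mv D (kron_id n m X) psi) (mv D (kron_id n m Y) psi) =
     mtrace n (mmul n sigma (mmul n (madj X) Y))).
  { intros X Y. unfold D. rewrite inner_kron. apply mtrace_meq.
    apply mmul_meq; [assumption|apply meq_refl]. }
  assert (T1 : forall k l, inner D (phi k) (mv D (kron_id n m U) (phi l)) =
     mtrace n (mmul n sigma (mmul n (mmul n (madj (A k)) U) (A l)))).
  { intros k l. rewrite (inner_ext D (phi k) (phi k) _ (mv D (kron_id n m (mmul n U (A l))) psi)).
    - unfold phi. rewrite TE. apply mtrace_meq. apply mmul_meq; [apply meq_refl|].
      apply pw_meq; intros; symmetry; apply mmul_assoc.
    - reflexivity.
    - intros i Hi. unfold phi, D. apply kron_mv_comp. exact Hi. }
  assert (T3 : forall k l, inner D (mv D (kron_id n m U) (phi k)) (mv D (kron_id n m U) (phi l)) =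
     mtrace n (mmul n sigma (mmul n (madj (A k)) (A l)))).
  { intros k l.
    rewrite (inner_ext D _ (mv D (kron_id n m (mmul n U (A k))) psi) _ (mv D (kron_id n m (mmul n U (A l))) psi)).
    - rewrite TE. apply mtrace_meq. apply mmul_meq; [apply meq_refl|].
      eapply meq_trans.
      { apply pw_meq; intros i j. unfold mmul at 1. apply Csum_ext; intros q _.
        rewrite madj_mmul. reflexivity. }
      eapply meq_trans. { apply pw_meq; intros; apply mmul_assoc. }
      eapply meq_trans.
      { apply mmul_meq; [apply meq_refl|].
        eapply meq_trans. { apply pw_meq; intros; symmetry; apply mmul_assoc. }
        apply mmul_meq; [exact HU|apply meq_refl]. }
      apply mmul_meq; [apply meq_refl|apply mmul_mid_l].
    - intros i Hi. unfold phi, D. apply kron_mv_comp. exact Hi.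
    - intros i Hi. unfold phi, D. apply kron_mv_comp. exact Hi. }
  assert (T2 : forall k l, inner D (phi k) (phi l) =
     mtrace n (mmul n sigma (mmul n (madj (A k)) (A l)))).
  { intros k l. unfold phi. apply TE. }
  set (P := Rsum r (fun i => Rsum r (fun j =>
            Cnorm2 (mtrace n (mmul n sigma (mmul n (madj (A i)) (A j))))))).
  assert (EP1 : Rsum r (fun k => Rsum r (fun l => Cnorm2 (inner D (phi k) (phi l)))) = P).
  { apply Rsum_ext; intros; apply Rsum_ext; intros. rewrite T2. reflexivity. }
  assert (EP3 : Rsum r (fun k => Rsum r (fun l => Cnorm2 (inner D (mv D (kron_id n m U) (phi k))
                 (mv D (kron_id n m U) (phi l))))) = P).
  { apply Rsum_ext; intros; apply Rsum_ext; intros. rewrite T3. reflexivity. }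
  assert (ET : Rsum r (fun k => Rsum r (fun l => Cnorm2 (inner D (phi k) (mv D (kron_id n m U) (phi l))))) =
     Rsum r (fun i => Rsum r (fun j =>
            Cnorm2 (mtrace n (mmul n sigma (mmul n (mmul n (madj (A i)) U) (A j))))))).
  { apply Rsum_ext; intros; apply Rsum_ext; intros. rewrite T1. reflexivity. }
  assert (Hsum : Rsum r (fun k => Re (inner D (phi k) (phi k))) = 1).
  { rewrite <- Re_Csum. transitivity (Re (Csum r (fun k => mtrace n (mmul n sigma (mmul n (madj (A k)) (A k)))))).
    { f_equal. apply Csum_ext; intros; apply T2. }
    rewrite trace_sum. rewrite (mtrace_meq n _ sigma). { rewrite Htr; reflexivity. }
    eapply meq_trans. { apply mmul_meq; [apply meq_refl|exact HK]. }
    apply mmul_mid_r. }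
  assert (HP : P <= 1).
  { rewrite <- EP1.
    apply Rle_trans with (Rsum r (fun k => Rsum r (fun l => Re (inner D (phi k) (phi k)) * Re (inner D (phi l) (phi l))))).
    { apply Rsum_le; intros; apply Rsum_le; intros; apply cauchy_schwarz. }
    rewrite <- Rsum_prod, Hsum. lra. }
  rewrite ET, EP1, EP3. rewrite sqrt_sqrt by lra. ring.
Qed.

Definition qf (d : nat) (M : Mat) (u : Vec) : C :=
  Csum d (fun i => Cmul (Cconj (u i)) (Csum d (fun j => Cmul (M i j) (u j)))).

Lemma quad_peel d M u : qf (S d) M u =
  Cadd (Cadd (qf d M u) (Cmul (Csum d (fun i => Cmul (Cconj (u i)) (M i d))) (u d)))
       (Cmul (Cconj (u d)) (Cadd (Csum d (fun j => Cmul (M d j) (u j))) (Cmul (M d d) (u d)))).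
Proof.
  unfold qf. simpl Csum at 1.
  transitivity (Cadd (Csum d (fun i => Cadd (Cmul (Cconj (u i)) (Csum d (fun j => Cmul (M i j) (u j))))
                                             (Cmul (Cmul (Cconj (u i)) (M i d)) (u d))))
                 (Cmul (Cconj (u d)) (Csum (S d) (fun j => Cmul (M d j) (u j))))).
  { f_equal. apply Csum_ext; intros i _. simpl. ring. }
  rewrite Csum_add, Csum_mul_r. simpl. ring.
Qed.

Lemma qf_ext d M u u' : (forall i, (i < d)%nat -> u i = u' i) -> qf d M u = qf d M u'.
Proof.
  intros H. unfold qf. apply Csum_ext; intros i Hi. rewrite H by lia. f_equal.
  apply Csum_ext; intros j Hj. rewrite H by lia. reflexivity.
Qed.

Lemma psd_qf d M u : psd d M -> 0 <= Re (qf d M u).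
Proof. intros [_ H]. apply H. Qed.

Lemma herm_diag d M i : hermitian d M -> (i < d)%nat -> Im (M i i) = 0.
Proof.
  intros H Hi. specialize (H i i Hi Hi). unfold madj, Cconj in H.
  destruct (M i i) as [a b]. injection H. simpl. lra.
Qed.

Lemma psd_peel d M w t : psd (S d) M ->
  0 <= Re (qf d M w) + Re (Cadd (Cmul (Cconj (Csum d (fun j => Cmul (M d j) (w j)))) t)
                               (Cmul (Cconj t) (Csum d (fun j => Cmul (M d j) (w j)))))
       + Re (M d d) * Cnorm2 t.
Proof.
  intros Hp.
  pose proof (psd_qf _ M (fun i => if Nat.eqb i d then t else w i) Hp) as H.
  rewrite quad_peel in H. rewrite Nat.eqb_refl in H.
  rewrite (qf_ext d M _ w) in H by (intros i Hi; destruct (Nat.eqb_spec i d); [lia|reflexivity]).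
  rewrite (Csum_ext d (fun j => Cmul (M d j) (if Nat.eqb j d then t else w j)) (fun j => Cmul (M d j) (w j))) in H
    by (intros i Hi; destruct (Nat.eqb_spec i d); [lia|reflexivity]).
  rewrite (Csum_ext d (fun i => Cmul (Cconj (if Nat.eqb i d then t else w i)) (M i d))
                      (fun i => Cconj (Cmul (M d i) (w i)))) in H.
  2:{ intros i Hi. destruct (Nat.eqb_spec i d); [lia|].
      destruct Hp as [Hh _]. rewrite (Hh i d) by lia. unfold madj.
      rewrite Cconj_mul. ring. }
  rewrite <- Csum_conj in H.
  pose proof (herm_diag _ M d (proj1 Hp) ltac:(lia)) as Hd.
  set (c := Csum d (fun j => Cmul (M d j) (w j))) in *.
  set (q := qf d M w) in *.
  destruct (M d d) as [a b]; simpl in Hd; subst b.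
  destruct c, t, q. unfold Cnorm2. simpl in *. nra.
Qed.

Definition evec (i : nat) : Vec := fun k => if Nat.eqb k i then C1 else C0.

Lemma qf_e d M i : (i < d)%nat -> qf d M (evec i) = M i i.
Proof.
  intros Hi. unfold qf.
  rewrite <- (Csum_delta d i (fun k => M k i)) by lia.
  apply Csum_ext; intros k Hk. unfold evec.
  rewrite (Csum_ext d _ (fun j => if Nat.eqb j i then M k j else C0)).
  2:{ intros j _. destruct (Nat.eqb_spec j i); apply Cext; simpl; ring. }
  rewrite Csum_delta by lia. destruct (Nat.eqb_spec k i); apply Cext; simpl; ring.
Qed.
Lemma Csum_e d M i : (i < d)%nat -> Csum d (fun j => Cmul (M j) (evec i j)) = M i.
Proof.
  intros Hi. rewrite <- (Csum_delta d i M) by lia. apply Csum_ext; intros j _. unfold evec.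
  destruct (Nat.eqb_spec j i); apply Cext; simpl; ring.
Qed.

Lemma qf_sub d M v w :
  qf d (fun i j => Csub (M i j) (Cmul (v i) (Cconj (v j)))) w =
  Csub (qf d M w) (Cmul (Cconj (Csum d (fun j => Cmul (Cconj (v j)) (w j))))
                        (Csum d (fun j => Cmul (Cconj (v j)) (w j)))).
Proof.
  unfold qf.
  transitivity (Csum d (fun i => Cadd (Cmul (Cconj (w i)) (Csum d (fun j => Cmul (M i j) (w j))))
     (Copp (Csum d (fun j => Cmul (Cmul (Cconj (w i)) (v i)) (Cmul (Cconj (v j)) (w j))))))).
  { apply Csum_ext; intros i _.
    rewrite <- !(Csum_mul_l d (Cconj (w i))), <- Csum_opp, <- Csum_add.
    apply Csum_ext; intros j _. unfold Csub. ring. }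
  rewrite Csum_add, Csum_opp. unfold Csub. f_equal. f_equal.
  rewrite Csum_conj, Csum_prod. apply Csum_ext; intros i _. apply Csum_ext; intros j _.
  rewrite Cconj_mul, Cconj_conj. ring.
Qed.

Lemma psd_restrict_herm d M : psd (S d) M -> forall v : Vec,
  hermitian d (fun i j => Csub (M i j) (Cmul (v i) (Cconj (v j)))).
Proof.
  intros [Hh _] v i j Hi Hj. unfold madj. rewrite (Hh i j) by lia. unfold madj.
  apply Cext; simpl; ring.
Qed.

Lemma chol_step d M : psd (S d) M -> exists v : Vec,
  psd d (fun i j => Csub (M i j) (Cmul (v i) (Cconj (v j)))) /\
  (forall i, (i <= d)%nat -> M i d = Cmul (v i) (Cconj (v d)) /\ M d i = Cmul (v d) (Cconj (v i))).
Proof.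
  intros Hp. set (a := Re (M d d)).
  pose proof (herm_diag _ M d (proj1 Hp) ltac:(lia)) as Hd.
  assert (HMdd : M d d = mkC a 0). { apply Cext; simpl; [reflexivity|exact Hd]. }
  assert (Hherm : forall i j, (i <= d)%nat -> (j <= d)%nat -> M i j = Cconj (M j i)).
  { intros i j Hi Hj. destruct Hp as [Hh _]. apply (Hh i j); lia. }
  assert (Ha : 0 <= a).
  { pose proof (psd_peel d M (fun _ => C0) C1 Hp) as H. cbv beta in H.
    rewrite (Csum_zero d (fun j => Cmul (M d j) C0)) in H by (intros; apply Cext; simpl; ring).
    assert (qf d M (fun _ => C0) = C0). { unfold qf. apply Csum_zero; intros; apply Cext; simpl; ring. }
    rewrite H0 in H. unfold Cnorm2 in H. simpl in H. fold a in H. lra. }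
  destruct (Rlt_dec 0 a) as [Hpos|Hnpos].
  - exists (fun i => Cscale (/ sqrt a) (M i d)). split.
    + split; [apply psd_restrict_herm; exact Hp|]. intros w.
      change (0 <= Re (qf d (fun i j => Csub (M i j) (Cmul (Cscale (/ sqrt a) (M i d)) (Cconj (Cscale (/ sqrt a) (M j d))))) w)).
      rewrite qf_sub.
      set (c := Csum d (fun j => Cmul (M d j) (w j))).
      assert (Ez : Csum d (fun j => Cmul (Cconj (Cscale (/ sqrt a) (M j d))) (w j)) = Cscale (/ sqrt a) c).
      { unfold c. rewrite (Csum_ext d _ (fun j => Cmul (mkC (/ sqrt a) 0) (Cmul (M d j) (w j)))).
        - rewrite Csum_mul_l. apply Cext; simpl; ring.
        - intros j Hj. rewrite (Hherm d j) by lia. apply Cext; simpl; ring. }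
      rewrite Ez.
      pose proof (psd_peel d M w (Cscale (- / a) c) Hp) as H. fold c in H. fold a in H.
      assert (Hs : / sqrt a * / sqrt a = / a).
      { rewrite <- Rinv_mult, sqrt_sqrt by lra. reflexivity. }
      assert (Hk : a * / a = 1) by (field; lra).
      assert (E1 : Re (Cadd (Cmul (Cconj c) (Cscale (- / a) c)) (Cmul (Cconj (Cscale (- / a) c)) c))
                   + a * Cnorm2 (Cscale (- / a) c) = - (/ a * Cnorm2 c)).
      { unfold Cnorm2; simpl. field. lra. }
      assert (E2 : Re (Csub (qf d M w) (Cmul (Cconj (Cscale (/ sqrt a) c)) (Cscale (/ sqrt a) c)))
                   = Re (qf d M w) - (/ sqrt a * / sqrt a) * Cnorm2 c).
      { unfold Cnorm2; simpl; ring. }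
      rewrite E2, Hs. lra.
    + intros i Hi. assert (Hs : / sqrt a * / sqrt a * a = 1).
      { rewrite <- Rinv_mult, sqrt_sqrt by lra. field. lra. }
      rewrite HMdd. split.
      * apply Cext; simpl.
        -- transitivity (Re (M i d) * (/ sqrt a * / sqrt a * a)); [rewrite Hs; ring|ring].
        -- transitivity (Im (M i d) * (/ sqrt a * / sqrt a * a)); [rewrite Hs; ring|ring].
      * rewrite (Hherm d i) by lia. apply Cext; simpl.
        -- transitivity (Re (M i d) * (/ sqrt a * / sqrt a * a)); [rewrite Hs; ring|ring].
        -- transitivity (- Im (M i d) * (/ sqrt a * / sqrt a * a)); [rewrite Hs; ring|ring].
  - assert (Ha0 : a = 0) by lra.
    assert (Hrow : forall i, (i < d)%nat -> M d i = C0).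
    { intros i Hi.
      assert (Hc : Csum d (fun j => Cmul (M d j) (evec i j)) = M d i) by (apply Csum_e; exact Hi).
      set (c := M d i) in *.
      destruct (Req_dec (Cnorm2 c) 0) as [H0|H0].
      - unfold Cnorm2 in H0. apply Cext; simpl; nra.
      - exfalso. set (mu := (Rabs (Re (M i i)) + 1) / (2 * Cnorm2 c)).
        pose proof (psd_peel d M (evec i) (Cscale (- mu) c) Hp) as H.
        rewrite Hc, qf_e in H by exact Hi. fold a in H. rewrite Ha0 in H.
        assert (Hn : 0 < Cnorm2 c) by (pose proof (Cnorm2_nonneg c); lra).
        assert (E : Re (Cadd (Cmul (Cconj c) (Cscale (- mu) c)) (Cmul (Cconj (Cscale (- mu) c)) c))
                    = - 2 * mu * Cnorm2 c) by (unfold Cnorm2; simpl; ring).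
        rewrite E in H. unfold mu in H.
        replace (-2 * ((Rabs (Re (M i i)) + 1) / (2 * Cnorm2 c)) * Cnorm2 c) with
          (- (Rabs (Re (M i i)) + 1)) in H by (field; lra).
        pose proof (Rle_abs (Re (M i i))). lra. }
    exists (fun _ => C0). split.
    + split; [apply psd_restrict_herm; exact Hp|]. intros w.
      change (0 <= Re (qf d (fun i j => Csub (M i j) (Cmul C0 (Cconj C0))) w)).
      rewrite qf_sub. 
      pose proof (psd_peel d M w C0 Hp) as H.
      rewrite (Csum_zero d (fun j => Cmul (Cconj C0) (w j))) by (intros; apply Cext; simpl; ring).
      set (q := qf d M w) in *. unfold Cnorm2 in *. simpl in *. nra.
    + intros i Hi. 
      assert (Hdi : M d i = C0).
      { destruct (Nat.eq_dec i d) as [->|Hne].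
        - rewrite HMdd, Ha0. reflexivity.
        - apply Hrow; lia. }
      split.
      * rewrite (Hherm i d) by lia. rewrite Hdi. apply Cext; simpl; ring.
      * rewrite Hdi. apply Cext; simpl; ring.
Qed.

Lemma chol : forall d M, psd d M -> exists V : nat -> Vec,
  forall i j, (i < d)%nat -> (j < d)%nat -> M i j = Csum d (fun k => Cmul (V k i) (Cconj (V k j))).
Proof.
  induction d; intros M Hp.
  - exists (fun _ _ => C0). intros; lia.
  - destruct (chol_step d M Hp) as [v [Hp' Hb]].
    destruct (IHd _ Hp') as [V' HV'].
    exists (fun k i => if Nat.ltb k d then (if Nat.eqb i d then C0 else V' k i) else v i).
    intros i j Hi Hj. simpl. rewrite Nat.ltb_irrefl.
    destruct (Nat.eq_dec i d) as [->|Hid].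
    + rewrite Csum_zero. { rewrite (proj2 (Hb j ltac:(lia))). ring. }
      intros k Hk. rewrite Nat.eqb_refl. destruct (Nat.ltb_spec k d); [|lia]. ring.
    + destruct (Nat.eq_dec j d) as [->|Hjd].
      * rewrite Csum_zero. { rewrite (proj1 (Hb i ltac:(lia))). ring. }
        intros k Hk. rewrite Nat.eqb_refl. destruct (Nat.ltb_spec k d); [|lia].
        apply Cext; simpl; ring.
      * rewrite (Csum_ext d _ (fun k => Cmul (V' k i) (Cconj (V' k j)))).
        2:{ intros k Hk. destruct (Nat.ltb_spec k d); [|lia].
            destruct (Nat.eqb_spec i d); [lia|]. destruct (Nat.eqb_spec j d); [lia|]. reflexivity. }
        rewrite <- HV' by lia. unfold Csub. ring.
Qed.

Lemma purification n sigma : density n sigma ->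
  exists m psi, unit_vec (n * m) psi /\ meq n (ptraceZ n m (proj psi)) sigma.
Proof.
  intros [Hp Htr]. destruct (chol n sigma Hp) as [V HV].
  exists n, (fun idx => V (idx mod n)%nat (idx / n)%nat).
  assert (Hpt : meq n (ptraceZ n n (proj (fun idx => V (idx mod n)%nat (idx / n)%nat))) sigma).
  { intros a b Ha Hb. unfold ptraceZ, proj. rewrite HV by lia. apply Csum_ext; intros k Hk.
    rewrite !idx_mod, !idx_div by lia. reflexivity. }
  split; [|exact Hpt].
  unfold unit_vec. rewrite Rsum_mult.
  transitivity (Re (mtrace n sigma)); [|rewrite Htr; reflexivity].
  unfold mtrace. rewrite Re_Csum. apply Rsum_ext; intros a Ha.
  rewrite HV by lia. rewrite Re_Csum. apply Rsum_ext; intros k Hk.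
  rewrite idx_mod, idx_div by lia. unfold Cnorm2; simpl. ring.
Qed.

Definition cser (x : nat -> C) (l : C) : Prop :=
  is_series (fun k => Re (x k)) (Re l) /\ is_series (fun k => Im (x k)) (Im l).

Lemma Rsum_sumf n f : Rsum (S n) f = sum_f_R0 f n.
Proof. induction n; simpl; [ring|]. rewrite <- IHn. reflexivity. Qed.

Lemma uncv_series (f : nat -> R) a : Un_cv (fun N => Rsum (S N) f) a -> is_series f a.
Proof.
  intros H. apply is_series_Reals. intros eps he. destruct (H eps he) as [N HN].
  exists N; intros k Hk. rewrite <- Rsum_sumf. apply HN. exact Hk.
Qed.

Lemma cser_of_uncv (f : nat -> C) l :
  Un_cv (fun N => Re (Csum (S N) f)) (Re l) -> Un_cv (fun N => Im (Csum (S N) f)) (Im l) -> cser f l.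
Proof.
  intros H1 H2. split; apply uncv_series.
  - intros eps he. destruct (H1 eps he) as [N HN]. exists N; intros k Hk. rewrite <- Re_Csum. apply HN; exact Hk.
  - intros eps he. destruct (H2 eps he) as [N HN]. exists N; intros k Hk. rewrite <- Im_Csum. apply HN; exact Hk.
Qed.

Lemma is_series_R_ext (a b : nat -> R) l : (forall k, a k = b k) -> is_series a l -> is_series b l.
Proof. intros; eapply is_series_ext; eauto. Qed.

Lemma cauchyC (x y : nat -> C) lx ly : cser x lx -> cser y ly ->
  ex_series (fun k => Rabs (Re (x k))) -> ex_series (fun k => Rabs (Im (x k))) ->
  ex_series (fun k => Rabs (Re (y k))) -> ex_series (fun k => Rabs (Im (y k))) ->
  cser (fun s => Csum (S s) (fun p => Cmul (x p) (y (s - p)%nat))) (Cmul lx ly).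
Proof.
  intros [Hx1 Hx2] [Hy1 Hy2] A1 A2 B1 B2.
  pose proof (is_series_mult _ _ _ _ Hx1 Hy1 A1 B1) as P11.
  pose proof (is_series_mult _ _ _ _ Hx2 Hy2 A2 B2) as P22.
  pose proof (is_series_mult _ _ _ _ Hx1 Hy2 A1 B2) as P12.
  pose proof (is_series_mult _ _ _ _ Hx2 Hy1 A2 B1) as P21.
  split.
  - pose proof (is_series_minus _ _ _ _ P11 P22) as P.
    eapply is_series_R_ext; [|exact P]. intros s. cbv beta.
    rewrite <- !Rsum_sumf, Re_Csum.
    change (plus ?a (opp ?b)) with (a - b). rewrite <- Rsum_sub. apply Rsum_ext; intros; reflexivity.
  - pose proof (is_series_plus _ _ _ _ P12 P21) as P.
    eapply is_series_R_ext; [|exact P]. intros s. cbv beta.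
    rewrite <- !Rsum_sumf, Im_Csum.
    change (plus ?a ?b) with (a + b). rewrite <- Rsum_add. apply Rsum_ext; intros; reflexivity.
Qed.

Lemma is_series_const_sum (f : nat -> R) c : (forall N, Rsum (S N) f = c) -> is_series f c.
Proof.
  intros H. apply uncv_series. intros eps he. exists O. intros k _.
  rewrite H. unfold R_dist. rewrite Rminus_diag, Rabs_R0. exact he.
Qed.

Lemma cser_delta c : cser (fun s => if Nat.eqb s 0 then c else C0) c.
Proof.
  split; apply is_series_const_sum; intros N; induction N; simpl in *; try ring;
  rewrite IHN; simpl; ring.
Qed.

Lemma cser_ext x y l : (forall k, x k = y k) -> cser x l -> cser y l.
Proof.
  intros H [H1 H2]. split; eapply is_series_R_ext; try eassumption; intros k; simpl; rewrite H; reflexivity.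
Qed.

Lemma cser_unique x l1 l2 : cser x l1 -> cser x l2 -> l1 = l2.
Proof.
  intros [A1 A2] [B1 B2]. apply Cext.
  - apply is_series_unique in A1. apply is_series_unique in B1. congruence.
  - apply is_series_unique in A2. apply is_series_unique in B2. congruence.
Qed.

Lemma cser_add x y lx ly : cser x lx -> cser y ly -> cser (fun k => Cadd (x k) (y k)) (Cadd lx ly).
Proof.
  intros [A1 A2] [B1 B2]. split.
  - exact (is_series_plus _ _ _ _ A1 B1).
  - exact (is_series_plus _ _ _ _ A2 B2).
Qed.

Lemma cser_sum n (f : nat -> nat -> C) (l : nat -> C) :
  (forall k, (k < n)%nat -> cser (f k) (l k)) ->
  cser (fun s => Csum n (fun k => f k s)) (Csum n l).
Proof.
  induction n; intros H.
  - simpl. split; apply is_series_const_sum; intros N; simpl; clear; induction N; simpl; try rewrite IHN; ring.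
  - simpl. apply cser_add; [apply IHn; intros; apply H; lia|apply H; lia].
Qed.

Lemma cser_conj x l : cser x l -> cser (fun k => Cconj (x k)) (Cconj l).
Proof.
  intros [A1 A2]. split; [exact A1|]. simpl. exact (is_series_opp _ _ A2).
Qed.

Lemma cser_scale_re c x l : cser x l -> cser (fun k => Cscale c (x k)) (Cscale c l).
Proof.
  intros [A1 A2]. split; simpl; [exact (is_series_scal c _ _ A1)|exact (is_series_scal c _ _ A2)].
Qed.

Lemma mpow_comm d X : forall p, meq d (mmul d X (mpow d X p)) (mmul d (mpow d X p) X).
Proof.
  induction p.
  - simpl. eapply meq_trans; [apply mmul_mid_r|]. apply meq_sym, mmul_mid_l.
  - simpl. eapply meq_trans. { apply pw_meq; intros; symmetry; apply mmul_assoc. }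
    apply mmul_meq; [exact IHp|apply meq_refl].
Qed.

Lemma mpow_add d X p : forall q, meq d (mmul d (mpow d X p) (mpow d X q)) (mpow d X (p + q)).
Proof.
  induction q.
  - simpl. rewrite Nat.add_0_r. apply mmul_mid_r.
  - rewrite Nat.add_succ_r. simpl. eapply meq_trans. { apply pw_meq; intros; symmetry; apply mmul_assoc. }
    apply mmul_meq; [exact IHq|apply meq_refl].
Qed.

Lemma mpow_adj d X : (forall i j, (i < d)%nat -> (j < d)%nat -> Cconj (X j i) = Copp (X i j)) ->
  forall p i j, (i < d)%nat -> (j < d)%nat ->
  Cconj (mpow d X p j i) = Cscale ((-1) ^ p) (mpow d X p i j).
Proof.
  intros HX p. induction p; intros i j Hi Hj.
  - simpl. unfold mid. destruct (Nat.eqb_spec j i), (Nat.eqb_spec i j); subst; try lia;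
    apply Cext; simpl; ring.
  - simpl. unfold mmul at 1. rewrite Csum_conj.
    rewrite (Csum_ext d _ (fun k => Cscale ((-1) ^ S p) (Cmul (X i k) (mpow d X p k j)))).
    2:{ intros k Hk. rewrite Cconj_mul, IHp, HX by lia. apply Cext; simpl; ring. }
    rewrite <- (mpow_comm d X p i j Hi Hj). unfold mmul.
    transitivity (Cmul (mkC ((-1) ^ S p) 0) (Csum d (fun k => Cmul (X i k) (mpow d X p k j)))).
    { rewrite <- Csum_mul_l. apply Csum_ext; intros; apply Cext; simpl; ring. }
    apply Cext; simpl; ring.
Qed.

Definition nrm (z : C) : R := Rabs (Re z) + Rabs (Im z).

Lemma nrm_nonneg z : 0 <= nrm z.
Proof. unfold nrm. pose proof (Rabs_pos (Re z)); pose proof (Rabs_pos (Im z)); lra. Qed.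
Lemma nrm_add z w : nrm (Cadd z w) <= nrm z + nrm w.
Proof.
  unfold nrm; simpl. pose proof (Rabs_triang (Re z) (Re w)). pose proof (Rabs_triang (Im z) (Im w)). lra.
Qed.
Lemma nrm_mul z w : nrm (Cmul z w) <= nrm z * nrm w.
Proof.
  unfold nrm; simpl. destruct z as [a b], w as [c e]; simpl.
  pose proof (Rabs_triang (a * c) (- (b * e))). pose proof (Rabs_triang (a * e) (b * c)).
  rewrite Rabs_Ropp in H. rewrite !Rabs_mult in *.
  unfold Rminus. nra.
Qed.
Lemma nrm_Csum n f : nrm (Csum n f) <= Rsum n (fun k => nrm (f k)).
Proof.
  induction n; simpl. { unfold nrm; simpl; rewrite Rabs_R0; lra. }
  eapply Rle_trans; [apply nrm_add|]. lra.
Qed.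
Lemma Rsum_ge_term n f k : (forall i, (i < n)%nat -> 0 <= f i) -> (k < n)%nat -> f k <= Rsum n f.
Proof.
  induction n; intros H Hk; [lia|]. simpl.
  destruct (Nat.eq_dec k n) as [->|Hne].
  - pose proof (Rsum_nonneg n f ltac:(intros; apply H; lia)). lra.
  - pose proof (IHn ltac:(intros; apply H; lia) ltac:(lia)). pose proof (H n ltac:(lia)). lra.
Qed.
Lemma Rsum_const n c : Rsum n (fun _ => c) = INR n * c.
Proof. induction n; [simpl; ring|]. change (Rsum (S n) (fun _ => c)) with (Rsum n (fun _ => c) + c). rewrite IHn, S_INR. ring. Qed.

Lemma mpow_bound d X : exists K, 0 <= K /\
  forall p i j, (i < d)%nat -> (j < d)%nat -> nrm (mpow d X p i j) <= K ^ p.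
Proof.
  set (B := Rsum d (fun i => Rsum d (fun j => nrm (X i j)))).
  assert (HB0 : 0 <= B) by (apply Rsum_nonneg; intros; apply Rsum_nonneg; intros; apply nrm_nonneg).
  assert (HB : forall i j, (i < d)%nat -> (j < d)%nat -> nrm (X i j) <= B).
  { intros i j Hi Hj. eapply Rle_trans.
    2:{ apply (Rsum_ge_term d (fun i => Rsum d (fun j => nrm (X i j))) i); [|exact Hi].
        intros; apply Rsum_nonneg; intros; apply nrm_nonneg. }
    apply (Rsum_ge_term d (fun j => nrm (X i j)) j); [intros; apply nrm_nonneg|exact Hj]. }
  exists (INR d * B + 1). pose proof (pos_INR d) as Hd.
  split; [nra|]. intros p. induction p; intros i j Hi Hj.
  - simpl. unfold mid, nrm. destruct (Nat.eqb i j); simpl; rewrite ?Rabs_R0, ?Rabs_R1; lra.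
  - simpl. unfold mmul. eapply Rle_trans; [apply nrm_Csum|].
    apply Rle_trans with (Rsum d (fun _ => (INR d * B + 1) ^ p * B)).
    { apply Rsum_le; intros k Hk. eapply Rle_trans; [apply nrm_mul|].
      apply Rmult_le_compat; try apply nrm_nonneg; [apply IHp|apply HB]; lia. }
    rewrite Rsum_const.
    assert (0 <= (INR d * B + 1) ^ p) by (apply pow_le; nra).
    nra.
Qed.

Lemma binom_alt s : Rsum (S s) (fun p => / INR (fact p) * (-1) ^ p * / INR (fact (s - p))) =
  if Nat.eqb s 0 then 1 else 0.
Proof.
  destruct s as [|s'].
  - simpl. field.
  - set (s := S s'). simpl (Nat.eqb s 0).
    assert (Hf : INR (fact s) <> 0) by apply INR_fact_neq_0.
    assert (E : Rsum (S s) (fun p => / INR (fact p) * (-1) ^ p * / INR (fact (s - p))) * INR (fact s) = 0).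
    { rewrite Rmult_comm, <- Rsum_mul_l, Rsum_sumf.
      transitivity ((-1 + 1) ^ s).
      2:{ unfold s. simpl. ring. }
      rewrite Binomial.binomial. apply sum_eq; intros p Hp.
      unfold Binomial.C. rewrite pow1.
      pose proof (INR_fact_neq_0 p). pose proof (INR_fact_neq_0 (s - p)). field; auto. }
    apply Rmult_integral in E. destruct E; [assumption|contradiction].
Qed.

Lemma ex_series_bound (z : nat -> C) K : (forall p, nrm (z p) <= K ^ p * / INR (fact p)) ->
  ex_series (fun p => Rabs (Re (z p))) /\ ex_series (fun p => Rabs (Im (z p))).
Proof.
  intros H.
  assert (Ee : ex_series (fun p => K ^ p * / INR (fact p))).
  { exists (exp K). pose proof (is_exp_Reals K) as P. unfold is_pseries in P.
    eapply is_series_ext; [|exact P]. intros p. simpl. rewrite pow_n_pow. reflexivity. }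
  split; (apply (@ex_series_le R_AbsRing R_CompleteNormedModule _ _ ltac:(idtac) Ee) || (eapply (@ex_series_le R_AbsRing R_CompleteNormedModule); [|exact Ee])); intros p; specialize (H p); unfold nrm in H;
  change (norm (Rabs ?x)) with (Rabs (Rabs x)); rewrite Rabs_Rabsolu;
  pose proof (Rabs_pos (Re (z p))); pose proof (Rabs_pos (Im (z p))); lra.
Qed.

Lemma nrm_scale r z : nrm (Cscale r z) = Rabs r * nrm z.
Proof. unfold nrm; simpl. rewrite !Rabs_mult. ring. Qed.

Lemma mexp_unitary n H U eps : hermitian n H -> is_mexp n (mscale (mkC 0 (- eps)) H) U ->
  meq n (mmul n (madj U) U) mid.
Proof.
  intros Hh HU i j Hi Hj.
  set (M := mscale (mkC 0 (- eps)) H) in *.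
  assert (HX : forall a b, (a < n)%nat -> (b < n)%nat -> Cconj (M b a) = Copp (M a b)).
  { intros a b Ha Hb. unfold M, mscale. rewrite (Hh a b) by lia. unfold madj.
    apply Cext; simpl; ring. }
  destruct (mpow_bound n M) as [K [HK HKb]].
  assert (HS : forall a b, (a < n)%nat -> (b < n)%nat ->
     cser (fun p => Cscale (/ INR (fact p)) (mpow n M p a b)) (U a b)).
  { intros a b Ha Hb. destruct (HU a b Ha Hb) as [H1 H2]. apply cser_of_uncv; assumption. }
  set (x := fun k p => Cscale (/ INR (fact p) * (-1) ^ p) (mpow n M p i k)).
  set (y := fun k q => Cscale (/ INR (fact q)) (mpow n M q k j)).
  assert (Hx : forall k, (k < n)%nat -> cser (x k) (Cconj (U k i))).
  { intros k Hk. eapply cser_ext; [|apply cser_conj, (HS k i Hk Hi)].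
    intros p. unfold x. cbv beta.
    transitivity (Cscale (/ INR (fact p)) (Cconj (mpow n M p k i))).
    { apply Cext; simpl; ring. }
    rewrite (mpow_adj n M HX p i k Hi Hk). apply Cext; simpl; ring. }
  assert (Hy : forall k, (k < n)%nat -> cser (y k) (U k j)).
  { intros k Hk. apply (HS k j Hk Hj). }
  assert (Bx : forall k, (k < n)%nat -> forall p, nrm (x k p) <= K ^ p * / INR (fact p)).
  { intros k Hk p. unfold x. rewrite nrm_scale, Rabs_mult, pow_1_abs, Rmult_1_r, Rabs_right.
    2:{ apply Rle_ge, Rlt_le, Rinv_0_lt_compat, INR_fact_lt_0. }
    specialize (HKb p i k Hi Hk).
    assert (0 <= / INR (fact p)) by (apply Rlt_le, Rinv_0_lt_compat, INR_fact_lt_0).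
    nra. }
  assert (By : forall k, (k < n)%nat -> forall p, nrm (y k p) <= K ^ p * / INR (fact p)).
  { intros k Hk p. unfold y. rewrite nrm_scale, Rabs_right.
    2:{ apply Rle_ge, Rlt_le, Rinv_0_lt_compat, INR_fact_lt_0. }
    specialize (HKb p k j Hk Hj).
    assert (0 <= / INR (fact p)) by (apply Rlt_le, Rinv_0_lt_compat, INR_fact_lt_0).
    nra. }
  assert (Hc : cser (fun s => Csum n (fun k => Csum (S s) (fun p => Cmul (x k p) (y k (s - p)%nat))))
                    (Csum n (fun k => Cmul (Cconj (U k i)) (U k j)))).
  { apply cser_sum. intros k Hk.
    destruct (ex_series_bound (x k) K (Bx k Hk)) as [A1 A2].
    destruct (ex_series_bound (y k) K (By k Hk)) as [B1 B2].
    apply cauchyC; auto. }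
  unfold mmul, madj.
  eapply cser_unique; [exact Hc|].
  eapply cser_ext; [|apply (cser_delta (mid i j))].
  intros s. symmetry.
  rewrite Csum_swap.
  rewrite (Csum_ext (S s) _ (fun p => Cmul (mkC (/ INR (fact p) * (-1) ^ p * / INR (fact (s - p))) 0)
                                         (mpow n M s i j))).
  2:{ intros p Hp. unfold x, y.
      transitivity (Cmul (mkC (/ INR (fact p) * (-1) ^ p * / INR (fact (s - p))) 0)
                         (mmul n (mpow n M p) (mpow n M (s - p)) i j)).
      { unfold mmul. rewrite <- Csum_mul_l. apply Csum_ext; intros; apply Cext; simpl; ring. }
      rewrite (mpow_add n M p (s - p) i j Hi Hj). replace (p + (s - p))%nat with s by lia. reflexivity. }
  rewrite Csum_mul_r.
  assert (Ec : Csum (S s) (fun p => mkC (/ INR (fact p) * (-1) ^ p * / INR (fact (s - p))) 0) =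
               mkC (if Nat.eqb s 0 then 1 else 0) 0).
  { rewrite <- binom_alt. apply Cext; rewrite ?Re_Csum, ?Im_Csum; simpl; [reflexivity|].
    rewrite Rsum_const; ring. }
  rewrite Ec. destruct (Nat.eqb_spec s 0).
  - subst s. simpl. apply Cext; simpl; ring.
  - apply Cext; simpl; ring.
Qed.

Theorem mainTheorem6 (n r : nat) (sigma : Mat) (A : nat -> Mat) (H U : Mat) (eps : R) :
  density n sigma ->
  kraus n r A ->
  hermitian n H ->
  is_mexp n (mscale (mkC 0 (- eps)) H) U ->
  is_glb
    (Gch_values n (chan_ext n r A)
       (fun m rho => mmul (n * m) (mmul (n * m) (kron_id n m U) (chan_ext n r A m rho))
                          (madj (kron_id n m U)))
       sigma)
    (1 + Rsum r (fun i => Rsum r (fun j =>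
            Cnorm2 (mtrace n (mmul n sigma (mmul n (mmul n (madj (A i)) U) (A j))))))
       - Rsum r (fun i => Rsum r (fun j =>
            Cnorm2 (mtrace n (mmul n sigma (mmul n (madj (A i)) (A j))))))).
Proof.
  intros Hd HK Hh HU.
  pose proof (mexp_unitary n H U eps Hh HU) as Hun.
  split.
  - intros y [m [psi [Hu [Hpt Hy]]]]. rewrite Hy.
    rewrite (value_lemma n r sigma A U m psi HK Hun (proj2 Hd) Hpt). lra.
  - intros z Hz. destruct (purification n sigma Hd) as [m [psi [Hu Hpt]]].
    apply Hz. exists m, psi. split; [exact Hu|]. split; [exact Hpt|].
    symmetry. exact (value_lemma n r sigma A U m psi HK Hun (proj2 Hd) Hpt).
Qed.
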